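(* Let $\mathrm{Cl}_{p,q}$ be a non-degenerate real Clifford algebra with generators $e_1,\dots,e_n$ and extended basis $\mathbf{B}$ as below, and write $e_Le_{L'}=m_{\lambda\lambda'}e_{L\triangle L'}$ for blades $e_L,e_{L'}\in\mathbf{B}$ with ordinals $\lambda,\lambda'$. Let $S,T$ be disjoint multi-indices with $S\prec T$ (every index in $S$ smaller than every index in $T$). If $e_L,e_{L'}\in\mathbf{B}$ satisfy $e_Le_{L'}=m_{\lambda\lambda'}e_{S\triangle T}$, then there is a blade $e_M\in\mathbf{B}$ (ordinal $\mu$) with $e_Le_M=m_{\lambda\mu}e_S$ and $e_Me_{L'}=m_{\mu\lambda'}e_T$, and \[ m_{\lambda\lambda'}=m_{\lambda\mu}\,\sigma_\mu\,m_{\mu\lambda'} . \]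
   Context: Generators satisfy $e_ie_j=-e_je_i$ ($i\ne j$), $e_i^2=\sigma_i\in\{\pm1\}$. For $S=(s_1<\dots<s_m)$, $e_S=e_{s_1}\cdots e_{s_m}$, $e_\emptyset=1$. $\mathbf{B}$ lists all $2^n$ blades in a fixed total order extending $e_i\prec e_j$ for $i<j$; blades are indexed by their ordinal. Products of blades satisfy $e_Me_N=m_{MN}e_{M\triangle N}$ with $m_{MN}\in\{\pm1\}$, where $\triangle$ is symmetric difference; $\sigma_\mu=\langle e_Me_M\rangle_0\in\{\pm1\}$ for the blade $e_M$ of ordinal $\mu$. *)

(* Defs.v *)
From mathcomp Require Import all_boot all_order all_algebra.
Set Implicit Arguments. Unset Strict Implicit. Unset Printing Implicit Defensive.
Import GRing.Theory Num.Theory.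
Local Open Scope ring_scope.

(* Blades e_S of a Clifford algebra with generators e_0..e_{n-1} (0-based),
   indexed by subsets S : {set 'I_n}; e_S = e_{s1} ... e_{sm}, s1 < ... < sm.
   The signature is sigma : 'I_n -> int with e_i^2 = sigma i in {1,-1}. *)

Definition symd (n : nat) (A B : {set 'I_n}) : {set 'I_n} := (A :\: B) :|: (B :\: A).

(* e_i * e_N = gen_sign i N * e_{ {i} (+) N }: e_i anticommutes past the
   generators of N smaller than i, then e_i e_i = sigma i if i \in N. *)
Definition gen_sign (n : nat) (sigma : 'I_n -> int) (i : 'I_n) (N : {set 'I_n}) : int :=
  (-1) ^+ #|[set j in N | (j < i)%N]| * (if i \in N then sigma i else 1).

(* left multiplication of e_N by the word e_{w1} e_{w2} ... e_{wk} :
   returns (sign, resulting blade index set) *)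
Fixpoint word_mul (n : nat) (sigma : 'I_n -> int) (w : seq 'I_n) (N : {set 'I_n})
  : int * {set 'I_n} :=
  match w with
  | [::] => (1, N)
  | i :: w' => let p := word_mul sigma w' N in
               (gen_sign sigma i p.2 * p.1, symd [set i] p.2)
  end.

(* e_M e_N = blade_sign sigma M N * e_{M (+) N}; enum M is increasing. *)
Definition blade_mul (n : nat) (sigma : 'I_n -> int) (M N : {set 'I_n}) :=
  word_mul sigma (enum M) N.
Definition blade_sign (n : nat) (sigma : 'I_n -> int) (M N : {set 'I_n}) : int :=
  (blade_mul sigma M N).1.

(* Main.v *)
Require Import Defs.
From mathcomp Require Import all_boot all_order all_algebra.
From mathcomp Require Import ring.
Import GRing.Theory Num.Theory.
Local Open Scope ring_scope.

Section Aux.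
Variable n : nat.
Variable sigma : 'I_n -> int.
Hypothesis hsigma : forall i, sigma i = 1 \/ sigma i = -1.

Lemma in_symd (A B : {set 'I_n}) x : (x \in symd A B) = (x \in A) (+) (x \in B).
Proof. by rewrite /symd !inE; case: (x \in A); case: (x \in B). Qed.

Lemma sorted_enumM (M : {set 'I_n}) : sorted (relpre val ltn) (enum M).
Proof.
rewrite /enum_mem -enumT. apply: sorted_filter.
  by move=> a b c /= ; apply: ltn_trans.
by rewrite -sorted_map val_enum_ord iota_ltn_sorted.
Qed.

Definition ff (i j : 'I_n) : int :=
  if (j < i)%N then -1 else if j == i then sigma i else 1.

Lemma ffsq i j : ff i j * ff i j = 1.
Proof.
rewrite /ff; case: ifP => _; first by rewrite mulrNN mulr1.
case: ifP => _; last by rewrite mulr1.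
by case: (hsigma i) => ->; rewrite ?mulrNN mulr1.
Qed.

Definition hh (i : 'I_n) (N : {set 'I_n}) : int := \prod_(j in N) ff i j.

Lemma prod_sq (I : finType) (P : pred I) (F : I -> int) :
  (forall i, F i * F i = 1) -> (\prod_(i in P) F i) * (\prod_(i in P) F i) = 1.
Proof. by move=> H; rewrite -big_split big1 // => i _; apply: H. Qed.

Lemma hhsq i N : hh i N * hh i N = 1.
Proof. by apply: prod_sq => j; apply: ffsq. Qed.

Lemma hh_eq i N : hh i N = gen_sign sigma i N.
Proof.
rewrite /hh /gen_sign (bigID (fun j : 'I_n => (j < i)%N)) /=.
congr (_ * _).
  rewrite (eq_bigr (fun=> -1)); last by move=> j /andP[_ Hj]; rewrite /ff Hj.
  rewrite prodr_const; congr (_ ^+ _); apply: eq_card => j; rewrite !inE.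
  done.
rewrite (bigID (pred1 i)) /= [X in _ * X]big1; last first.
  move=> j /andP[/andP[_ Hlt] Hne]; rewrite /ff (negbTE Hlt) (negbTE Hne) //.
rewrite mulr1; case: (boolP (i \in N)) => Hi.
  rewrite (big_pred1 i); first by rewrite /ff ltnn eqxx.
  move=> j /=; case: (eqVneq j i) => [->|]; rewrite ?Hi ?ltnn ?andbF //.
rewrite big_pred0 // => j /=; case: (eqVneq j i) => [->|]; rewrite ?(negbTE Hi) ?andbF //.
Qed.

Lemma word_mulE w N : sorted (relpre val ltn) w ->
  word_mul sigma w N = (\prod_(i <- w) hh i N, symd [set x in w] N).
Proof.
elim: w => [|i w IH] Hs /=.
  rewrite big_nil; congr pair; apply/setP => x; rewrite in_symd !inE //.
have Hw := path_sorted Hs.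
have /allP Hall := order_path_min (fun a b c => @ltn_trans (val a) (val b) (val c)) Hs.
rewrite IH //= big_cons; congr pair; last first.
  apply/setP => x; rewrite !in_symd !inE; case: (eqVneq x i) => [->|] //=.
  have : i \notin w by apply/negP => /Hall; rewrite ltnn.
  by move/negbTE => ->.
congr (_ * _); rewrite hh_eq /gen_sign; congr (_ ^+ _ * _).
  apply: eq_card => j; rewrite !inE.
  case: (boolP (j \in w)) => Hj; rewrite /= ?andbT ?andbF ?andTb ?orbF //.
  have := Hall j Hj => /= Hij.
  case: (ltnP j i) => Hji; last by rewrite !andbF.
  by have := ltn_trans Hij Hji; rewrite ltnn.
rewrite in_symd inE.
case: (boolP (i \in w)) => Hi //=.
by have := Hall i Hi; rewrite /= ltnn.
Qed.

Definition G (A B : {set 'I_n}) : int := \prod_(i in A) hh i B.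

Lemma blade_mulE M N : blade_mul sigma M N = (G M N, symd M N).
Proof.
rewrite /blade_mul word_mulE ?sorted_enumM // big_enum; congr pair.
congr symd; apply/setP => x; by rewrite inE mem_enum.
Qed.

Lemma blade_signE M N : blade_sign sigma M N = G M N.
Proof. by rewrite /blade_sign blade_mulE. Qed.

Lemma prod_symd (h : 'I_n -> int) (hsq : forall i, h i * h i = 1) A B :
  \prod_(i in symd A B) h i = \prod_(i in A) h i * \prod_(i in B) h i.
Proof.
rewrite !(big_mkcond (fun i => i \in _)) -big_split; apply: eq_bigr => i _.
rewrite in_symd; case: (i \in A); case: (i \in B); rewrite /= ?mulr1 ?mul1r ?hsq //.
Qed.

Lemma G_symdl A B N : G (symd A B) N = G A N * G B N.
Proof. by rewrite /G prod_symd // => i; apply: hhsq. Qed.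

Lemma G_symdr A B C : G A (symd B C) = G A B * G A C.
Proof.
rewrite /G -big_split; apply: eq_bigr => i _; rewrite /hh prod_symd // => j.
exact: ffsq.
Qed.

Lemma G_sq A B : G A B * G A B = 1.
Proof. by apply: prod_sq => i; apply: hhsq. Qed.

End Aux.
Arguments G {n} sigma A B.
Arguments G_symdl {n sigma} hsigma A B N.
Arguments G_symdr {n sigma} hsigma A B C.
Arguments G_sq {n sigma} hsigma A B.

Theorem lemma2 (n : nat) (sigma : 'I_n -> int)
  (hsigma : forall i, sigma i = 1 \/ sigma i = -1)
  (S T L L' : {set 'I_n})
  (hdisj : [disjoint S & T])
  (hST : forall s t, s \in S -> t \in T -> (s < t)%N)
  (hLL' : blade_mul sigma L L' = (blade_sign sigma L L', symd S T)) :
  exists M : {set 'I_n},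
    blade_mul sigma L M = (blade_sign sigma L M, S) /\
    blade_mul sigma M L' = (blade_sign sigma M L', T) /\
    blade_sign sigma L L' =
      blade_sign sigma L M * blade_sign sigma M M * blade_sign sigma M L'.
Proof.
move: hLL'; rewrite blade_mulE => -[_ H].
have HL' : L' = symd (symd L S) T.
  apply/setP => x; move/setP: H => /(_ x); rewrite !in_symd.
  by case: (x \in L); case: (x \in L'); case: (x \in S); case: (x \in T).
exists (symd L S); rewrite !blade_signE !blade_mulE; split; [|split].
- congr pair; apply/setP => x; rewrite !in_symd.
  by case: (x \in L); case: (x \in S).
- congr pair; rewrite HL'; apply/setP => x; rewrite !in_symd.
  by case: (x \in L); case: (x \in S); case: (x \in T).
have GST : G sigma S T = 1.
  rewrite /G big1 // => i Hi; rewrite /hh big1 // => j Hj.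
  have Hij := hST _ _ Hi Hj.
  rewrite /ff ltnNge (ltnW Hij) /=.
  have /negbTE -> : j != i by apply/eqP => E; move: Hij; rewrite E ltnn.
  done.
rewrite HL' !(G_symdl hsigma) !(G_symdr hsigma) GST.
have sa := G_sq hsigma L L; have sb := G_sq hsigma L S.
have sc := G_sq hsigma S L; have sd := G_sq hsigma S S.
move: sa sb sc sd.
set a := G sigma L L; set b := G sigma L S; set c := G sigma S L.
set d := G sigma S S; set e := G sigma L T.
move=> sa sb sc sd.
transitivity (a * b * e * (a * a) * (b * b) * (c * c) * (d * d) * 1).
  by rewrite sa sb sc sd !mulr1.
ring.
Qed.
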